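(* Let $S$ be a nearly simple monoid whose kernel contains a minimal idempotent. Then $S$ is completely regular.
   Context: The kernel of a semigroup is its unique minimal two-sided ideal. A monoid is nearly simple if it has a unique minimal two-sided ideal and that ideal contains all non-invertible elements. An idempotent $p$ ($pp=p$) is minimal if minimal for the order $p\le q\iff p=pq=qp$ on idempotents. A semigroup is completely regular if every element $a$ admits $x$ with $a=axa$ and $ax=xa$. Semigroups considered have no zero element. *)

(* Defs.v *)
Section Semigroups.
Variable T : Type.
Variable mul : T -> T -> T.

Definition associative : Prop :=
  forall a b c : T, mul a (mul b c) = mul (mul a b) c.

Definition is_unit (e : T) : Prop := forall a : T, mul e a = a /\ mul a e = a.

Definition is_zero (z : T) : Prop := forall a : T, mul z a = z /\ mul a z = z.

Definition two_sided_ideal (I : T -> Prop) : Prop :=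
  (exists a, I a) /\ forall s a : T, I a -> I (mul s a) /\ I (mul a s).

Definition minimal_ideal (K : T -> Prop) : Prop :=
  two_sided_ideal K /\
  forall J : T -> Prop, two_sided_ideal J -> (forall x, J x -> K x) ->
    forall x, K x -> J x.

Definition is_kernel (K : T -> Prop) : Prop :=
  minimal_ideal K /\
  forall K' : T -> Prop, minimal_ideal K' -> forall x, K' x <-> K x.

Definition invertible (e a : T) : Prop :=
  exists b : T, mul a b = e /\ mul b a = e.

Definition nearly_simple (e : T) (K : T -> Prop) : Prop :=
  is_kernel K /\ forall a : T, ~ invertible e a -> K a.

Definition idempotent (p : T) : Prop := mul p p = p.

Definition idem_le (p q : T) : Prop := p = mul p q /\ p = mul q p.

Definition minimal_idempotent (p : T) : Prop :=
  idempotent p /\ forall q : T, idempotent q -> idem_le q p -> q = p.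

Definition completely_regular : Prop :=
  forall a : T, exists x : T, a = mul (mul a x) a /\ mul a x = mul x a.

End Semigroups.

Arguments associative {T}. Arguments is_unit {T}. Arguments is_zero {T}.
Arguments two_sided_ideal {T}. Arguments minimal_ideal {T}. Arguments is_kernel {T}.
Arguments invertible {T}. Arguments nearly_simple {T}. Arguments idempotent {T}.
Arguments idem_le {T}. Arguments minimal_idempotent {T}. Arguments completely_regular {T}.

(* Main.v *)
Require Import Defs.
From Stdlib Require Import Classical.

Theorem corollary2p9 (T : Type) (mul : T -> T -> T) (e : T)
  (Hassoc : associative mul) (Hunit : is_unit mul e)
  (Hnozero : forall z : T, ~ is_zero mul z)
  (K : T -> Prop) (HS : nearly_simple mul e K)
  (Hmin : exists p : T, K p /\ minimal_idempotent mul p) :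
  completely_regular mul.
Proof.
  destruct HS as [[[[HKne HKid] HKmin] _] HnonK].
  destruct Hmin as [p [Kp [Pidem Pprim]]].
  unfold idempotent in Pidem.
  assert (Hpp : forall x, mul p (mul p x) = mul p x).
  { intro x. rewrite Hassoc, Pidem. reflexivity. }
  assert (gen : forall y z, K y -> K z -> exists u v, z = mul u (mul y v)).
  { intros y z Ky Kz.
    refine (HKmin (fun z => exists u v, z = mul u (mul y v)) _ _ z Kz).
    - split.
      + exists y, e, e. destruct (Hunit y) as [H1 H2]. rewrite H2. rewrite (proj1 (Hunit y)). reflexivity.
      + intros s w [u [v Hw]]. subst w. split.
        * exists (mul s u), v. apply Hassoc.
        * exists u, (mul v s). rewrite <- !Hassoc. reflexivity.
    - intros w [u [v Hw]]. subst w. apply (HKid u). apply (HKid v). exact Ky. }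
  intro a.
  destruct (classic (invertible mul e a)) as [[b [Hab Hba]] | Hna].
  { exists b. rewrite Hab. split.
    - symmetry. apply (proj1 (Hunit a)).
    - rewrite Hba. reflexivity. }
  assert (Ka : K a) by (apply HnonK; exact Hna).
  destruct (gen p a Kp Ka) as [s [t Ea]].
  assert (Kg : K (mul p (mul t (mul s p)))).
  { apply (HKid (mul t (mul s p)) p). exact Kp. }
  destruct (gen _ p Kg Kp) as [u [v E1]].
  assert (KEY : forall x, mul u (mul p (mul t (mul s (mul p (mul v x))))) = mul p x).
  { intro x. transitivity (mul (mul u (mul (mul p (mul t (mul s p))) v)) x).
    - repeat rewrite <- Hassoc. reflexivity.
    - rewrite <- E1. reflexivity. }
  assert (G1 : forall x, mul p (mul t (mul s (mul p (mul v (mul p (mul u (mul p x))))))) = mul p x).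
  { assert (Hq : mul p (mul t (mul s (mul p (mul v (mul p (mul u p)))))) = p).
    { apply Pprim.
      - unfold idempotent. repeat rewrite <- Hassoc.
        repeat first [rewrite KEY | rewrite Hpp | rewrite Pidem]. reflexivity.
      - unfold idem_le. repeat rewrite <- Hassoc.
        repeat first [rewrite KEY | rewrite Hpp | rewrite Pidem]. split; reflexivity. }
    intro x. transitivity (mul ((mul p (mul t (mul s (mul p (mul v (mul p (mul u p)))))))) (mul p x)).
    - repeat rewrite <- Hassoc. rewrite Hpp. reflexivity.
    - rewrite Hq, Hpp. reflexivity. }
  assert (G2 : forall x, mul p (mul v (mul p (mul u (mul p (mul t (mul s (mul p x))))))) = mul p x).
  { assert (Hq : mul p (mul v (mul p (mul u (mul p (mul t (mul s p)))))) = p).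
    { apply Pprim.
      - unfold idempotent. repeat rewrite <- Hassoc.
        repeat first [rewrite KEY | rewrite Hpp | rewrite Pidem]. reflexivity.
      - unfold idem_le. repeat rewrite <- Hassoc.
        repeat first [rewrite KEY | rewrite Hpp | rewrite Pidem]. split; reflexivity. }
    intro x. transitivity (mul ((mul p (mul v (mul p (mul u (mul p (mul t (mul s p)))))))) (mul p x)).
    - repeat rewrite <- Hassoc. rewrite Hpp. reflexivity.
    - rewrite Hq, Hpp. reflexivity. }
  set (g' := mul p (mul v (mul p (mul u p)))).
  exists (mul s (mul g' (mul g' t))).
  subst a. unfold g'. split; repeat rewrite <- Hassoc;
    repeat first [rewrite G1 | rewrite G2 | rewrite KEY | rewrite Hpp | rewrite Pidem]; reflexivity.
Qed.
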